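(* Let $r$ be a prime power and $q=r^2$. Then there exists a Hermitian self-orthogonal linear code over $\mathbb{F}_q$ with parameters $[2(q+1),\,2\lfloor r/2\rfloor-1,\,d]_q$ where $d\ge q-\lfloor r/2\rfloor+3$.
   Context: For $a\in\mathbb{F}_q$, $\overline{a}:=a^r$. The Hermitian inner product on $\mathbb{F}_q^n$ is $\langle u,v\rangle_H=\sum_i u_i\overline{v_i}$; a linear code $C$ is Hermitian self-orthogonal if $C\subseteq C^{\perp_H}$. A code with parameters $[n,k,d]_q$ is a linear code of length $n$, dimension $k$ and minimum Hamming weight $d$ over $\mathbb{F}_q$. *)

(* Defs.v *)
From HB Require Import structures.
From mathcomp Require Import all_boot all_order all_algebra all_field.
Set Implicit Arguments. Unset Strict Implicit. Unset Printing Implicit Defensive.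
Import GRing.Theory.
Local Open Scope ring_scope.

Definition hwt (F : finFieldType) (n : nat) (c : 'rV[F]_n) : nat :=
  #|[set i : 'I_n | c 0 i != 0]|.

Definition herm_ip (F : finFieldType) (r n : nat) (u v : 'rV[F]_n) : F :=
  \sum_(i < n) u 0 i * (v 0 i) ^+ r.

Definition herm_self_orth (F : finFieldType) (r n : nat)
    (C : {vspace 'rV[F]_n}) : Prop :=
  forall u v, u \in C -> v \in C -> herm_ip r u v = 0.

Definition min_dist (F : finFieldType) (n : nat)
    (C : {vspace 'rV[F]_n}) (d : nat) : Prop :=
  (exists c, [/\ c \in C, c != 0 & hwt c = d]) /\
  (forall c, c \in C -> c != 0 -> (d <= hwt c)%N).

Definition prime_power (r : nat) : Prop :=
  exists p m : nat, [/\ prime p, (0 < m)%N & r = (p ^ m)%N].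

(* Main.v *)
Require Import Defs.
From HB Require Import structures.
From mathcomp Require Import all_boot all_order all_algebra all_field all_fingroup all_solvable zify ring.
Set Implicit Arguments. Unset Strict Implicit. Unset Printing Implicit Defensive.
Import GRing.Theory.
Local Open Scope ring_scope.

Lemma exists_a (F : finFieldType) (r p m : nat) : prime p -> (0 < m)%N ->
  r = (p ^ m)%N -> #|F| = (r ^ 2)%N -> exists a : F, a ^+ r.+1 = -1.
Proof.
move=> pp m0 rE hF.
have [p2|podd] := even_prime pp.
  have ch : 2 \in [pchar F].
    by apply: (@card_finPcharP F 2 (m * 2)) => //; rewrite hF rE -p2 expnM.
  exists 1; rewrite expr1n.
  have h2 := pcharf0 ch.
  apply/eqP; rewrite -subr_eq0 opprK; apply/eqP.
  by rewrite -h2 natrD.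
have rodd : odd r by rewrite rE oddX podd orbT.
have r_gt1 : (1 < r)%N.
  have : (p <= r)%N.
    apply: dvdn_leq; first by rewrite rE expn_gt0 prime_gt0.
    by rewrite rE dvdn_exp.
  by move: (prime_gt1 pp); lia.
set t := r./2.
have rt : r = t.*2.+1 by rewrite -[LHS]odd_double_half rodd.
have t0 : (0 < t)%N by move: r_gt1; rewrite rt; lia.
set e := (t * (t.*2 + 2))%N.
have qe : (#|F|.-1 = 2 * e)%N by rewrite hF rt /e; nia.
have e0 : (0 < e)%N by rewrite /e; nia.
pose rs := enum (predC1 (0 : F)).
have : has (#|F|.-1).-primitive_root rs.
  apply: has_prim_root.
  - by rewrite qe; lia.
  - apply/allP => x; rewrite mem_enum /= => x0.
    rewrite unity_rootE; apply/eqP.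
    have := expf_card x.
    have -> : #|F| = (#|F|.-1).+1 by rewrite hF rt; nia.
    rewrite exprS => h; apply: (mulfI x0); by rewrite mulr1.
  - exact: enum_uniq.
  - by rewrite -cardE cardC1.
case/hasP => g _ pg.
exists (g ^+ t).
rewrite -exprM.
have -> : (t * r.+1 = e)%N by rewrite /e rt; nia.
set y := g ^+ e.
have y2 : y * y = 1.
  by rewrite /y -exprD addnn -mul2n -qe prim_expr_order.
have y1 : y != 1.
  rewrite /y -(expr0 g) (eq_prim_root_expr pg) mod0n modn_small ?qe; lia.
have : (y - 1) * (y + 1) = 0 by rewrite mulrDr !mulrBl y2; ring.
move/eqP; rewrite mulf_eq0 subr_eq0 (negbTE y1) /= addr_eq0.
by move/eqP.
Qed.

Definition pt (F : finFieldType) (t : nat) : F := nth 0 (enum F) t.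

Definition Ent (F : finFieldType) (a : F) (s : F -> F) (j : nat) : F :=
  if (j < 2 * #|F|)%N then (if odd j then a else 1) * s (pt F j./2) else 0.

Definition genG (F : finFieldType) (k n : nat) (a : F) : 'M[F]_(k, n) :=
  \matrix_(i, j) Ent a (fun x => x ^+ i) j.

Definition ev (F : finFieldType) (k : nat) (v : 'rV[F]_k) (x : F) : F :=
  \sum_(i < k) v 0 i * x ^+ i.

Lemma entE (F : finFieldType) k n a (v : 'rV[F]_k) (j : 'I_n) :
  (v *m genG k n a) 0 j = Ent a (ev v) j.
Proof.
rewrite mxE /ev /Ent; under eq_bigr => i _ do rewrite mxE /Ent.
case h: (nat_of_ord j < _)%N; last first.
  by rewrite big1 // => i _; rewrite mulr0.
rewrite mulr_sumr; apply: eq_bigr => i _.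
by rewrite mulrCA.
Qed.

Lemma sum_pairs (F : finFieldType) (h : nat -> F) N :
  \sum_(0 <= j < 2 * N) h j = \sum_(0 <= t < N) (h (2 * t)%N + h (2 * t).+1).
Proof.
elim: N => [|N IH]; first by rewrite !big_geq.
have -> : (2 * N.+1 = (2 * N).+2)%N by lia.
by rewrite big_nat_recr // big_nat_recr //= IH big_nat_recr //= addrA.
Qed.


Lemma ip0  (F : finFieldType) r k n (a : F) (v w : 'rV[F]_k) :
  a ^+ r.+1 = -1 -> (2 * #|F| <= n)%N ->
  herm_ip r (v *m genG k n a) (w *m genG k n a) = 0.
Proof.
move=> ha hn; rewrite /herm_ip.
under eq_bigr => j _ do rewrite !entE.
rewrite -(big_mkord xpredT (fun j => Ent a (ev v) j * Ent a (ev w) j ^+ r)).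
have h2 : \sum_(2 * #|F| <= j < n) Ent a (ev v) j * Ent a (ev w) j ^+ r = 0.
  rewrite big1_seq // => j; rewrite mem_index_iota => /andP[_ /andP[hj _]].
  by rewrite /Ent ltnNge hj /= mul0r.
rewrite (@big_cat_nat _ _ _ (2 * #|F|)) //= h2 addr0.
rewrite sum_pairs big_nat big1 // => t /andP[_ ht].
rewrite /Ent !mul2n ltn_double ltn_Sdouble ht odd_double /= doubleK uphalf_double.
rewrite odd_double /= !mul1r exprMn.
have ha' : a * a ^+ r = -1 by rewrite -exprS.
set V := ev v _; set W := ev w _.
transitivity (V * W ^+ r * (1 + a * a ^+ r)); first ring.
by rewrite ha' addrN mulr0.
Qed.

Lemma rank_lt (F : finFieldType) (x : F) : (enum_rank x < #|F|)%N.
Proof. exact: ltn_ord. Qed.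

Lemma weight (F : finFieldType) k n (a : F) (v : 'rV[F]_k) :
  a != 0 -> (2 * #|F| <= n)%N -> v != 0 ->
  (2 * (#|F| - (k - 1)) <= hwt (v *m genG k n a))%N.
Proof.
move=> a0 hn vn0.
pose E := fun i : nat => oapp (fun j : 'I_k => v 0 j) 0 (insub i).
pose p := \poly_(i < k) E i.
have Ei (i : 'I_k) : E i = v 0 i by rewrite /E valK.
have evp x : ev v x = p.[x].
  by rewrite horner_poly /ev; apply: eq_bigr => i _; rewrite Ei.
have pn0 : p != 0.
  apply/eqP => p0; move/eqP: vn0; apply; apply/rowP => i; rewrite mxE.
  by move: (congr1 (fun q : {poly F} => q`_i) p0); rewrite coef_poly ltn_ord coef0 Ei.
pose R := [set x : F | root p x].
have hR : (#|R| < size p)%N.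
  rewrite cardE; apply: max_poly_roots => //; last exact: enum_uniq.
  by apply/allP => x; rewrite mem_enum inE.
have hpk : (size p <= k)%N by apply: size_poly.
pose S := ~: R.
have hS : #|S| = (#|F| - #|R|)%N by rewrite cardsCs setCK.
have q0 : (0 < #|F|)%N by apply/card_gt0P; exists 0.
have n0 : (0 < n)%N by move: hn q0; lia.
pose j0 : 'I_n := Ordinal n0.
have valb (x : F) (b : bool) : (b + (enum_rank x).*2 < n)%N.
  have := rank_lt x; move: hn; case: b => /=; lia.
pose g := fun xb : F * bool => insubd j0 (xb.2 + (enum_rank xb.1).*2)%N.
have gE x b : val (g (x, b)) = (b + (enum_rank x).*2)%N by rewrite /g insubdK //; exact: valb.
have ginj : injective g.
  move=> [x b] [y c] /(congr1 val); rewrite !gE => e.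
  have e1 := congr1 half e; have e2 := congr1 odd e.
  rewrite !half_bit_double in e1; rewrite !oddD !odd_double !addbF !oddb in e2.
  by rewrite e2 (enum_rank_inj (val_inj e1)).
have sub : g @: setX S [set: bool] \subset [set i | (v *m genG k n a) 0 i != 0].
  apply/subsetP => j /imsetP[[x b] /setXP[xS _] ->]; rewrite inE entE /Ent gE.
  have hlt : (b + (enum_rank x).*2 < 2 * #|F|)%N.
    by have := rank_lt x; case: b => /=; lia.
  rewrite hlt oddD odd_double addbF oddb half_bit_double /pt nth_enum_rank evp.
  rewrite mulf_neq0 //; first by case: (b : bool) hlt => _ //; rewrite oner_eq0.
  by move: xS; rewrite inE inE.
have := subset_leq_card sub; rewrite (card_imset _ ginj) cardsX cardsT card_bool.
rewrite /hwt hS; set m := #|[set i | _]|; move: hR hpk; lia.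
Qed.

Theorem corollary5p1 (r : nat) (hr : prime_power r)
    (F : finFieldType) (hF : #|F| = (r ^ 2)%N) :
  exists (C : {vspace 'rV[F]_(2 * (r ^ 2 + 1))}) (d : nat),
    [/\ herm_self_orth r C,
        \dim C = (2 * r./2 - 1)%N,
        min_dist C d
      & (r ^ 2 - r./2 + 3 <= d)%N].
Proof.
case: hr => p [m [pp m0 rE]].
have [a ha] := exists_a pp m0 rE hF.
have a0 : a != 0.
  apply/eqP => a0; move: ha; rewrite a0 expr0n /= => /eqP.
  by rewrite eq_sym oppr_eq0 oner_eq0.
have r2 : (2 <= r)%N.
  have : (p <= r)%N.
    apply: dvdn_leq; first by rewrite rE expn_gt0 prime_gt0.
    by rewrite rE dvdn_exp.
  by move: (prime_gt1 pp); lia.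
have rr : (2 * r <= r ^ 2)%N by rewrite expnS expn1 leq_mul2r r2 orbT.
have rh := odd_double_half r.
have hn : (2 * #|F| <= 2 * (r ^ 2 + 1))%N by rewrite hF; lia.
set n := (2 * (r ^ 2 + 1))%N in hn *.
set k := (2 * r./2 - 1)%N.
pose G := genG k n a.
pose f : 'Hom('rV[F]_k, 'rV[F]_n) := linfun (mulmxr G).
pose C := limg f.
have memC c : reflect (exists v, c = v *m G) (c \in C).
  apply: (iffP memv_imgP) => [[v _ ->]|[v ->]]; exists v; rewrite ?lfunE //.
  exact: memvf.
have wt v : v != 0 -> (r ^ 2 - r./2 + 3 <= hwt (v *m G))%N.
  move=> vn0; have := weight a0 hn vn0; rewrite hF -/G /k.
  have := rr; have := rh; case: (odd r) => /=; lia.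
have hwt0 : hwt (0 : 'rV[F]_n) = 0%N.
  rewrite /hwt; apply/eqP; rewrite cards_eq0; apply/eqP/setP => i.
  by rewrite !inE mxE eqxx.
have k0 : (0 < k)%N by rewrite /k; have := rh; case: (odd r) => /=; lia.
pose v0 : 'rV[F]_k := const_mx 1.
have v0n : v0 != 0.
  apply/eqP => /rowP /(_ (Ordinal k0)); rewrite !mxE => /eqP; by rewrite oner_eq0.
pose P d := [exists c : 'rV[F]_n, [&& c \in C, c != 0 & hwt c == d]].
have exP : exists d, P d.
  exists (hwt (v0 *m G)); apply/existsP; exists (v0 *m G); rewrite eqxx andbT.
  apply/andP; split; first by apply/memC; exists v0.
  apply/eqP => e. have := wt _ v0n. rewrite e hwt0. lia.
case: (ex_minnP exP) => d Pd mind.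
exists C, d; split.
- by move=> u w /memC[v ->] /memC[v' ->]; apply: ip0.
- rewrite limg_dim_eq ?dimvf /=.
    by rewrite /dim /= mul1n.
  rewrite capfv; apply/eqP/lker0P => x y; rewrite !lfunE /= => e.
  apply/eqP; rewrite -subr_eq0; apply/negPn/negP => hxy.
  have := wt _ hxy; rewrite mulmxBl e subrr hwt0; lia.
- split.
    by case/existsP: Pd => c /and3P[cC c0 /eqP hc]; exists c.
  move=> c cC c0; apply: mind; apply/existsP; exists c; by rewrite cC c0 eqxx.
- case/existsP: Pd => c /and3P[/memC[v ->] c0 /eqP <-].
  apply: wt; apply: contraNneq c0 => ->; by rewrite mul0mx.
Qed.
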